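(* Let $\gamma<\delta$, $c>0$, $g(t)=c(\delta-t)$ on $[\gamma,\delta]$, and let $0<\beta<\alpha$. Then for every concave function $\varphi:[\gamma,\delta]\to[0,\infty)$ that is not identically zero, \[\frac{\int_\gamma^\delta t\,\varphi(t)^{\alpha-\beta}g(t)^\beta\,dt}{\int_\gamma^\delta \varphi(t)^{\alpha-\beta}g(t)^\beta\,dt}\leq\frac{\int_\gamma^\delta t\,(t-\gamma)^{\alpha-\beta}g(t)^\beta\,dt}{\int_\gamma^\delta (t-\gamma)^{\alpha-\beta}g(t)^\beta\,dt}=\gamma+(\delta-\gamma)\frac{\alpha-\beta+1}{\alpha+2}.\] *)

(* Defs.v *)
From Stdlib Require Import Reals.
From Coquelicot Require Import Coquelicot.
Open Scope R_scope.

(* Real power x^y for x >= 0, with the convention 0^y = 0 (used only for y > 0). *)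
Definition rpow (x y : R) : R :=
  if Rlt_dec 0 x then Rpower x y else 0.

Definition concave_on (a b : R) (phi : R -> R) : Prop :=
  forall x y l, a <= x <= b -> a <= y <= b -> 0 <= l <= 1 ->
    l * phi x + (1 - l) * phi y <= phi (l * x + (1 - l) * y).

(* Main.v *)
Require Import Defs.
From Stdlib Require Import Reals Lra Psatz Classical.
From Coquelicot Require Import Coquelicot.
Open Scope R_scope.

Lemma rpow_pos x y : 0 < x -> rpow x y = Rpower x y.
Proof. intros H; unfold rpow; destruct (Rlt_dec 0 x); [reflexivity|lra]. Qed.
Lemma rpow_nonpos x y : x <= 0 -> rpow x y = 0.
Proof. intros H; unfold rpow; destruct (Rlt_dec 0 x); [lra|reflexivity]. Qed.
Lemma rpow_ge0 x y : 0 <= rpow x y.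
Proof. unfold rpow; destruct (Rlt_dec 0 x); [unfold Rpower; left; apply exp_pos|lra]. Qed.
Lemma rpow_gt0 x y : 0 < x -> 0 < rpow x y.
Proof. intros H; rewrite rpow_pos by lra; unfold Rpower; apply exp_pos. Qed.
Lemma rpow_mult x y p : 0 <= x -> 0 <= y -> rpow (x*y) p = rpow x p * rpow y p.
Proof.
  intros Hx Hy. destruct (Rle_lt_or_eq_dec 0 x Hx) as [Hx'|Hx'].
  - destruct (Rle_lt_or_eq_dec 0 y Hy) as [Hy'|Hy'].
    + rewrite !rpow_pos; try nra. symmetry; apply Rpower_mult_distr; lra.
    + subst y. rewrite Rmult_0_r, rpow_nonpos by lra; ring.
  - subst x. rewrite Rmult_0_l, rpow_nonpos by lra; ring.
Qed.
Lemma rpow_le x y p : 0 < p -> 0 <= x <= y -> rpow x p <= rpow y p.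
Proof.
  intros Hp [Hx Hxy]. destruct (Rle_lt_or_eq_dec 0 x Hx) as [Hx'|Hx'].
  - rewrite !rpow_pos by lra. apply Rle_Rpower_l; lra.
  - subst x. rewrite rpow_nonpos by lra. apply rpow_ge0.
Qed.
Lemma rpow_S x q : rpow x (q+1) = x * rpow x q.
Proof.
  destruct (Rlt_dec 0 x).
  - rewrite !rpow_pos by lra. rewrite Rpower_plus, Rpower_1 by lra. ring.
  - rewrite !rpow_nonpos by lra. ring.
Qed.

Lemma rpow_small p eps : 0 < p -> 0 < eps ->
  exists d, 0 < d /\ forall y, Rabs y < d -> rpow y p < eps.
Proof.
  intros Hp He. exists (Rpower eps (/p)). split. unfold Rpower; apply exp_pos.
  intros y Hy. destruct (Rlt_dec 0 y).
  - rewrite rpow_pos by lra. rewrite Rabs_pos_eq in Hy by lra.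
    replace eps with (Rpower (Rpower eps (/p)) p).
    apply Rlt_Rpower_l; lra.
    rewrite Rpower_mult. rewrite Rinv_l by lra. apply Rpower_1; lra.
  - rewrite rpow_nonpos by lra. lra.
Qed.

Lemma cont_eps f x : (forall eps, 0 < eps -> exists d, 0 < d /\
   forall y, Rabs (y - x) < d -> Rabs (f y - f x) < eps) -> continuity_pt f x.
Proof.
  intros H eps Heps. destruct (H eps Heps) as [d [Hd Hy]]. exists d; split; [lra|].
  intros y [_ Hy']. simpl in *. unfold R_dist in *. apply Hy; auto.
Qed.

Lemma rpow_cont p x : 0 < p -> continuity_pt (fun y => rpow y p) x.
Proof.
  intros Hp. destruct (Rtotal_order x 0) as [Hx|[Hx|Hx]].
  - apply continuity_pt_locally_ext with (a := - x) (f := fun _ => 0); [lra| |].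
    intros y Hy. unfold Rdist in Hy. rewrite rpow_nonpos; [reflexivity|].
    apply Rabs_def2 in Hy. lra.
    apply continuity_pt_const. intros u v; reflexivity.
  - subst x. apply cont_eps. intros eps He. destruct (rpow_small p eps Hp He) as [d [Hd H]].
    exists d; split; auto. intros y Hy. rewrite (rpow_nonpos 0) by lra.
    rewrite Rminus_0_r in *. rewrite Rabs_pos_eq by apply rpow_ge0. apply H; auto.
  - apply continuity_pt_locally_ext with (a := x) (f := fun y => Rpower y p); [lra| |].
    intros y Hy. unfold Rdist in Hy. apply Rabs_def2 in Hy. rewrite rpow_pos; [reflexivity|lra].
    apply derivable_continuous_pt. exists (p * Rpower x (p - 1)). apply derivable_pt_lim_power; lra.
Qed.

Lemma rpow_deriv q x : 1 < q -> derivable_pt_lim (fun y => rpow y q) x (q * rpow x (q - 1)).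
Proof.
  intros Hq. destruct (Rtotal_order x 0) as [Hx|[Hx|Hx]].
  - rewrite rpow_nonpos by lra. rewrite Rmult_0_r.
    apply derivable_pt_lim_locally_ext with (a := x - 1) (b := 0) (f := fun _ => 0); [lra| |].
    intros z Hz. rewrite rpow_nonpos; [reflexivity|lra].
    apply derivable_pt_lim_const.
  - subst x. rewrite (rpow_nonpos 0) by lra. rewrite Rmult_0_r.
    intros eps He. destruct (rpow_small (q-1) eps ltac:(lra) He) as [d [Hd H]].
    exists (mkposreal d Hd). intros h Hh Hhd. simpl in Hhd.
    rewrite Rplus_0_l, (rpow_nonpos 0) by lra.
    replace q with ((q - 1) + 1) at 1 by ring. rewrite rpow_S.
    replace ((h * rpow h (q - 1) - 0) / h - 0) with (rpow h (q-1)) by (field; auto).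
    rewrite Rabs_pos_eq by apply rpow_ge0. apply H; auto.
  - rewrite rpow_pos by lra.
    apply derivable_pt_lim_locally_ext with (a := 0) (b := x + 1) (f := fun y => Rpower y q); [lra| |].
    intros z Hz. rewrite rpow_pos; [reflexivity|lra].
    apply derivable_pt_lim_power; lra.
Qed.

Lemma div_le_cross A B d1 d2 : 0 < d1 -> 0 < d2 -> A * d2 <= B * d1 -> A / d1 <= B / d2.
Proof.
  intros H1 H2 H. assert (E : B / d2 - A / d1 = (B * d1 - A * d2) / (d1 * d2)) by (field; lra).
  assert (0 <= (B * d1 - A * d2) / (d1 * d2)).
  { unfold Rdiv. apply Rmult_le_pos; [lra|]. left; apply Rinv_0_lt_compat; nra. }
  lra.
Qed.

Lemma abs_between x lo hi : lo <= x <= hi -> Rabs x <= Rabs lo + Rabs hi.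
Proof. intros. unfold Rabs; repeat destruct Rcase_abs; lra. Qed.

Lemma mono_lim_left (s : R -> R) l r : l < r ->
  (forall u v, l < u -> u < v -> v < r -> s v <= s u) ->
  (exists B, forall u, l < u < r -> s u <= B) ->
  exists S, (forall u, l < u < r -> s u <= S) /\
    forall eps, 0 < eps -> exists eta, 0 < eta /\
      forall u, l < u < l + eta -> u < r -> S - eps < s u.
Proof.
  intros Hlr Hmono [B HB].
  set (E := fun y => exists u, l < u < r /\ y = s u).
  assert (Hb : bound E). { exists B. intros y [u [Hu ->]]. apply HB; auto. }
  assert (Hne : exists x, E x). { exists (s ((l+r)/2)). exists ((l+r)/2). split; [lra|auto]. }
  destruct (completeness E Hb Hne) as [S [HS1 HS2]].
  exists S. split.
  - intros u Hu. apply HS1. exists u; auto.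
  - intros eps He.
    assert (exists u, l < u < r /\ S - eps < s u).
    { apply NNPP. intros Hn. assert (S <= S - eps); [|lra].
      apply HS2. intros y [u [Hu ->]].
      destruct (Rle_or_lt (s u) (S - eps)); auto. exfalso; apply Hn; exists u; auto. }
    destruct H as [u1 [Hu1 Hs1]]. exists (u1 - l). split; [lra|].
    intros u Hu Hur. destruct (Req_dec u u1) as [->|Hne1]; [lra|].
    assert (s u1 <= s u) by (apply Hmono; lra). lra.
Qed.

Lemma mono_lim_right (s : R -> R) l r : l < r ->
  (forall u v, l < u -> u < v -> v < r -> s v <= s u) ->
  (exists B, forall u, l < u < r -> B <= s u) ->
  exists T, (forall u, l < u < r -> T <= s u) /\
    forall eps, 0 < eps -> exists eta, 0 < eta /\
      forall u, r - eta < u < r -> l < u -> s u < T + eps.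
Proof.
  intros Hlr Hmono [B HB].
  destruct (mono_lim_left (fun u => - s (- u)) (-r) (-l)) as [S [HS1 HS2]]; [lra| | |].
  { intros u v H1 H2 H3. assert (s (-u) <= s (-v)) by (apply Hmono; lra). lra. }
  { exists (-B). intros u Hu. assert (B <= s (-u)) by (apply HB; lra). lra. }
  exists (- S). split.
  - intros u Hu. assert (- s (- - u) <= S) by (apply HS1; lra). rewrite Ropp_involutive in H. lra.
  - intros eps He. destruct (HS2 eps He) as [eta [Heta H]]. exists eta; split; auto.
    intros u Hu Hlu. assert (S - eps < - s (- - u)) by (apply H; lra).
    rewrite Ropp_involutive in H0. lra.
Qed.

Section Concave.
Variables (a b : R) (phi : R -> R).
Hypothesis Hab : a < b.
Hypothesis Hconc : concave_on a b phi.

Lemma chord u x v : a <= u -> u < x -> x < v -> v <= b ->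
  phi u * (v - x) + phi v * (x - u) <= phi x * (v - u).
Proof.
  intros H1 H2 H3 H4. set (l := (v - x) / (v - u)).
  assert (Hl : 0 <= l <= 1).
  { unfold l; split. apply Rmult_le_pos; [lra|left; apply Rinv_0_lt_compat; lra].
    assert (H5 : (v-x)/(v-u) <= 1/1) by (apply div_le_cross; lra).
    replace (1/1) with 1 in H5 by field. exact H5. }
  assert (H := Hconc u v l ltac:(lra) ltac:(lra) Hl).
  replace (l * u + (1 - l) * v) with x in H by (unfold l; field; lra).
  assert (E : phi u * (v-x) + phi v * (x-u) = (v-u) * (l*phi u + (1-l)*phi v)) by (unfold l; field; lra).
  rewrite E, (Rmult_comm (phi x)). apply Rmult_le_compat_l; lra.
Qed.

Definition sl u v := (phi v - phi u) / (v - u).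

Lemma sl_sym u v : u <> v -> sl u v = sl v u.
Proof. intros; unfold sl; field; lra. Qed.

Lemma sl1 u x v : a <= u -> u < x -> x < v -> v <= b -> sl u v <= sl u x.
Proof. intros. unfold sl. apply div_le_cross; try lra. assert (H' := chord u x v H H0 H1 H2). nra. Qed.
Lemma sl2 u x v : a <= u -> u < x -> x < v -> v <= b -> sl x v <= sl u v.
Proof. intros. unfold sl. apply div_le_cross; try lra. assert (H' := chord u x v H H0 H1 H2). nra. Qed.

Lemma lip_interior z t : a < z < b -> a <= t <= b ->
  Rabs (phi t - phi z) <= (Rabs (sl a z) + Rabs (sl z b)) * Rabs (t - z).
Proof.
  intros Hz Ht. destruct (Rtotal_order t z) as [Htz|[Htz|Htz]].
  - assert (Hlo : sl z b <= sl t z).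
    { apply Rle_trans with (sl t b). apply sl2; lra. apply sl1; lra. }
    assert (Hhi : sl t z <= sl a z).
    { destruct (Rle_lt_or_eq_dec a t ltac:(lra)) as [H|H]; [|subst; lra].
      apply sl2; lra. }
    replace (phi t - phi z) with (- (sl t z * (z - t))) by (unfold sl; field; lra).
    rewrite Rabs_Ropp, Rabs_mult, (Rabs_minus_sym t z), (Rabs_pos_eq (z - t)) by lra.
    apply Rmult_le_compat_r; [lra|]. rewrite Rplus_comm; apply abs_between; lra.
  - subst; unfold Rminus; rewrite !Rplus_opp_r, Rabs_R0; rewrite Rmult_0_r; lra.
  - assert (Hlo : sl z b <= sl z t).
    { destruct (Rle_lt_or_eq_dec t b ltac:(lra)) as [H|H]; [|subst; lra]. apply sl1; lra. }
    assert (Hhi : sl z t <= sl a z).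
    { apply Rle_trans with (sl a t). apply sl2; lra. apply sl1; lra. }
    replace (phi t - phi z) with (sl z t * (t - z)) by (unfold sl; field; lra).
    rewrite Rabs_mult, (Rabs_pos_eq (t - z)) by lra.
    apply Rmult_le_compat_r; [lra|]. rewrite Rplus_comm; apply abs_between; lra.
Qed.
End Concave.

Lemma left_limit a b phi : a < b -> concave_on a b phi ->
  exists La, forall eps, 0 < eps -> exists d, 0 < d /\
     forall t, a < t < a + d -> Rabs (phi t - La) < eps.
Proof.
  intros Hab Hc. set (x0 := (a+b)/2).
  set (s := fun t => (phi t - phi x0) / (t - x0)).
  assert (Hs : forall u, u < x0 -> s u = sl phi u x0).
  { intros u Hu. unfold s, sl. field. lra. }
  destruct (mono_lim_left s a x0) as [S [HS1 HS2]].
  - unfold x0; lra.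
  - intros u v H1 H2 H3. rewrite !Hs by lra. apply (sl2 a b phi Hc); unfold x0 in *; lra.
  - exists (sl phi a x0). intros u Hu. rewrite Hs by lra. apply (sl2 a b phi Hc); unfold x0 in *; lra.
  - exists (phi x0 + S * (a - x0)). intros eps He.
    assert (Hxa : 0 < x0 - a) by (unfold x0; lra).
    destruct (HS2 (eps / (2 * (x0 - a)))) as [eta [Heta H]].
    { apply Rdiv_lt_0_compat; lra. }
    set (d2 := eps / (2 * (Rabs S + 1))).
    assert (Hd2 : 0 < d2) by (unfold d2; apply Rdiv_lt_0_compat; [lra|]; assert (0 <= Rabs S) by apply Rabs_pos; lra).
    exists (Rmin eta (Rmin (x0 - a) d2)). split.
    { apply Rmin_pos; [lra|apply Rmin_pos; lra]. }
    intros t Ht.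
    assert (Ht1 : t < a + eta) by (assert (Rmin eta (Rmin (x0 - a) d2) <= eta) by apply Rmin_l; lra).
    assert (Ht2 : t < x0) by (assert (Rmin eta (Rmin (x0 - a) d2) <= Rmin (x0-a) d2) by apply Rmin_r;
       assert (Rmin (x0 - a) d2 <= x0 - a) by apply Rmin_l; lra).
    assert (Ht3 : t - a < d2) by (assert (Rmin eta (Rmin (x0 - a) d2) <= Rmin (x0-a) d2) by apply Rmin_r;
       assert (Rmin (x0 - a) d2 <= d2) by apply Rmin_r; lra).
    assert (Hst := H t ltac:(lra) Ht2). assert (HSt := HS1 t ltac:(lra)).
    set (e1 := S - s t).
    replace (phi t - (phi x0 + S * (a - x0))) with (e1 * (x0 - t) + S * (t - a))
      by (unfold e1, s; field; lra).
    eapply Rle_lt_trans; [apply Rabs_triang|].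
    rewrite Rabs_mult, (Rabs_pos_eq (x0 - t)) by lra.
    rewrite Rabs_mult, (Rabs_pos_eq (t - a)) by lra.
    rewrite (Rabs_pos_eq e1) by (unfold e1; lra).
    assert (A1 : e1 * (x0 - t) < eps / 2).
    { assert (e1 * (x0 - t) <= e1 * (x0 - a)) by (apply Rmult_le_compat_l; unfold e1; lra).
      assert (e1 < eps / (2 * (x0 - a))) by (unfold e1; lra).
      assert (e1 * (x0 - a) < eps / (2 * (x0 - a)) * (x0 - a)) by (apply Rmult_lt_compat_r; lra).
      replace (eps / (2 * (x0 - a)) * (x0 - a)) with (eps / 2) in H2 by (field; lra). lra. }
    assert (A2 : Rabs S * (t - a) < eps / 2).
    { assert (0 <= Rabs S) by apply Rabs_pos.
      assert (Rabs S * (t - a) <= Rabs S * d2) by (apply Rmult_le_compat_l; lra).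
      assert (Rabs S * d2 < (Rabs S + 1) * d2) by nra.
      replace ((Rabs S + 1) * d2) with (eps / 2) in H2 by (unfold d2; field; lra). lra. }
    lra.
Qed.

Lemma concave_refl a b phi : concave_on a b phi -> concave_on (-b) (-a) (fun u => phi (- u)).
Proof.
  intros Hc x y l Hx Hy Hl. replace (- (l * x + (1 - l) * y)) with (l * (-x) + (1 - l) * (-y)) by ring.
  apply Hc; lra.
Qed.

Lemma right_limit a b phi : a < b -> concave_on a b phi ->
  exists Lb, forall eps, 0 < eps -> exists d, 0 < d /\
     forall t, b - d < t < b -> Rabs (phi t - Lb) < eps.
Proof.
  intros Hab Hc. destruct (left_limit (-b) (-a) (fun u => phi (-u))) as [L HL].
  lra. apply concave_refl; auto.
  exists L. intros eps He. destruct (HL eps He) as [d [Hd H]]. exists d; split; auto.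
  intros t Ht. assert (H' := H (-t) ltac:(lra)). simpl in H'. rewrite Ropp_involutive in H'. auto.
Qed.

Lemma ext_cont a b phi : a < b -> concave_on a b phi ->
  exists psi, (forall t, a < t < b -> psi t = phi t) /\
     forall z, a <= z <= b -> continuity_pt psi z.
Proof.
  intros Hab Hc. destruct (left_limit a b phi Hab Hc) as [La HLa].
  destruct (right_limit a b phi Hab Hc) as [Lb HLb].
  set (psi := fun t => if Rle_dec t a then La else if Rle_dec b t then Lb else phi t).
  assert (Hin : forall t, a < t < b -> psi t = phi t).
  { intros t Ht. unfold psi. destruct (Rle_dec t a); [lra|]. destruct (Rle_dec b t); [lra|auto]. }
  exists psi. split; auto.
  intros z Hz. apply cont_eps. intros eps He.
  destruct (Rle_lt_or_eq_dec a z ltac:(lra)) as [Haz|Haz].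
  - destruct (Rle_lt_or_eq_dec z b ltac:(lra)) as [Hzb|Hzb].
    + set (M := Rabs (sl phi a z) + Rabs (sl phi z b)).
      assert (HM : 0 <= M) by (unfold M; assert (0 <= Rabs (sl phi a z)) by apply Rabs_pos;
                                 assert (0 <= Rabs (sl phi z b)) by apply Rabs_pos; lra).
      set (d2 := eps / (M + 1)).
      assert (Hd2 : 0 < d2) by (unfold d2; apply Rdiv_lt_0_compat; lra).
      exists (Rmin (Rmin (z - a) (b - z)) d2). split.
      { apply Rmin_pos; [apply Rmin_pos; lra|lra]. }
      intros y Hy.
      assert (H1 : Rmin (Rmin (z - a) (b - z)) d2 <= Rmin (z-a) (b-z)) by apply Rmin_l.
      assert (H2 : Rmin (Rmin (z - a) (b - z)) d2 <= d2) by apply Rmin_r.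
      assert (H3 : Rmin (z - a) (b - z) <= z - a) by apply Rmin_l.
      assert (H4 : Rmin (z - a) (b - z) <= b - z) by apply Rmin_r.
      apply Rabs_def2 in Hy as Hy'.
      rewrite !Hin by lra.
      eapply Rle_lt_trans. apply (lip_interior a b phi Hab Hc z y); lra.
      fold M. assert (M * Rabs (y - z) <= M * d2) by (apply Rmult_le_compat_l; lra).
      assert (M * d2 < (M+1) * d2) by nra.
      replace ((M + 1) * d2) with eps in H0 by (unfold d2; field; lra). lra.
    + subst z. destruct (HLb eps He) as [d [Hd H]]. exists (Rmin d (b - a)).
      split. apply Rmin_pos; lra.
      intros y Hy. assert (Rmin d (b - a) <= d) by apply Rmin_l.
      assert (Rmin d (b - a) <= b - a) by apply Rmin_r. apply Rabs_def2 in Hy.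
      unfold psi at 2. destruct (Rle_dec b a); [lra|]. destruct (Rle_dec b b); [|lra].
      destruct (Rle_dec b y).
      * unfold psi. destruct (Rle_dec y a); [lra|]. destruct (Rle_dec b y); [|lra].
        rewrite Rminus_diag, Rabs_R0; lra.
      * rewrite Hin by lra. apply H; lra.
  - subst z. destruct (HLa eps He) as [d [Hd H]]. exists (Rmin d (b - a)).
    split. apply Rmin_pos; lra.
    intros y Hy. assert (Rmin d (b - a) <= d) by apply Rmin_l.
    assert (Rmin d (b - a) <= b - a) by apply Rmin_r. apply Rabs_def2 in Hy.
    unfold psi at 2. destruct (Rle_dec a a); [|lra].
    destruct (Rle_dec y a).
    * unfold psi. destruct (Rle_dec y a); [|lra]. rewrite Rminus_diag, Rabs_R0; lra.
    * rewrite Hin by lra. apply H; lra.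
Qed.

Lemma exR f a b : a <= b -> (forall z, a <= z <= b -> continuity_pt f z) -> ex_RInt f a b.
Proof.
  intros Hab H. apply (@ex_RInt_continuous R_CompleteNormedModule). rewrite Rmin_left, Rmax_right by lra.
  intros z Hz. apply continuity_pt_filterlim. apply H; auto.
Qed.

Lemma RInt_const' c u v : RInt (fun _ => c) u v = (v - u) * c.
Proof. rewrite RInt_const. reflexivity. Qed.

Lemma Chasles' f a b c : ex_RInt f a b -> ex_RInt f b c -> RInt f a c = RInt f a b + RInt f b c.
Proof. intros. symmetry. apply (RInt_Chasles f a b c); auto. Qed.

Lemma int_pos f a b x1 : a < b -> (forall z, a <= z <= b -> continuity_pt f z) ->
  (forall x, a < x < b -> 0 <= f x) -> a < x1 < b -> 0 < f x1 -> 0 < RInt f a b.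
Proof.
  intros Hab Hc Hf Hx1 Hfx1.
  assert (Hc1 := Hc x1 ltac:(lra)).
  unfold continuity_pt, continue_in, limit1_in, limit_in in Hc1.
  destruct (Hc1 (f x1 / 2) ltac:(lra)) as [d [Hd Hd']].
  assert (Hnear : forall y, Rabs (y - x1) < d -> f x1 / 2 <= f y).
  { intros y Hy. destruct (Req_dec y x1) as [->|Hne]; [lra|].
    assert (H := Hd' y). simpl in H. unfold R_dist in H.
    assert (Rabs (f y - f x1) < f x1 / 2) by (apply H; split; [split; [exact I|intro E; apply Hne; auto]|exact Hy]).
    apply Rabs_def2 in H0. lra. }
  set (e := Rmin (d/2) (Rmin (x1 - a) (b - x1) / 2)).
  assert (He1 : e <= d/2) by apply Rmin_l.
  assert (He2 : e <= Rmin (x1 - a) (b - x1) / 2) by apply Rmin_r.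
  assert (H3 : Rmin (x1 - a) (b - x1) <= x1 - a) by apply Rmin_l.
  assert (H4 : Rmin (x1 - a) (b - x1) <= b - x1) by apply Rmin_r.
  assert (He0 : 0 < e) by (apply Rmin_pos; [lra|]; assert (0 < Rmin (x1 - a) (b - x1)) by (apply Rmin_pos; lra); lra).
  assert (Hsub : forall u v, a <= u <= v -> v <= b -> ex_RInt f u v).
  { intros u v Huv Hvb. apply exR; [lra|]. intros z Hz; apply Hc; lra. }
  rewrite (Chasles' f a (x1 - e) b) by (apply Hsub; lra).
  rewrite (Chasles' f (x1 - e) (x1 + e) b) by (apply Hsub; lra).
  assert (0 <= RInt f a (x1 - e)) by (apply RInt_ge_0; [lra|apply Hsub; lra|intros; apply Hf; lra]).
  assert (0 <= RInt f (x1 + e) b) by (apply RInt_ge_0; [lra|apply Hsub; lra|intros; apply Hf; lra]).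
  assert (RInt (fun _ => f x1 / 2) (x1 - e) (x1 + e) <= RInt f (x1 - e) (x1 + e)).
  { apply RInt_le; [lra|apply ex_RInt_const|apply Hsub; lra|].
    intros x Hx. apply Hnear. apply Rabs_def1; lra. }
  rewrite RInt_const' in H1. nra.
Qed.

Lemma RInt_lin f g a b u v : ex_RInt f a b -> ex_RInt g a b ->
  RInt (fun t => u * f t + v * g t) a b = u * RInt f a b + v * RInt g a b.
Proof.
  intros Hf Hg. apply (@is_RInt_unique R_CompleteNormedModule).
  apply (is_RInt_plus (fun t => u * f t) (fun t => v * g t)).
  apply (is_RInt_scal f a b u). exact (@RInt_correct R_CompleteNormedModule f a b Hf).
  apply (is_RInt_scal g a b v). exact (@RInt_correct R_CompleteNormedModule g a b Hg).
Qed.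

Lemma ex_RInt_lin f g a b u v : ex_RInt f a b -> ex_RInt g a b ->
  ex_RInt (fun t => u * f t + v * g t) a b.
Proof.
  intros Hf Hg. 
  apply (ex_RInt_plus (fun t => u * f t) (fun t => v * g t)).
  apply (ex_RInt_scal f a b u); auto.
  apply (ex_RInt_scal g a b v); auto.
Qed.

Lemma cont_left a p x : 0 < p -> continuity_pt (fun t => rpow (t - a) p) x.
Proof.
  intros Hp. apply (continuity_pt_comp (fun t => t - a) (fun y => rpow y p)).
  apply continuity_pt_minus. apply continuity_pt_id. apply continuity_pt_const; intros u v; auto.
  apply rpow_cont; auto.
Qed.
Lemma cont_right b p x : 0 < p -> continuity_pt (fun t => rpow (b - t) p) x.
Proof.
  intros Hp. apply (continuity_pt_comp (fun t => b - t) (fun y => rpow y p)).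
  apply continuity_pt_minus. apply continuity_pt_const; intros u v; auto. apply continuity_pt_id.
  apply rpow_cont; auto.
Qed.

Lemma dlim_eq f x l l' : derivable_pt_lim f x l -> l = l' -> derivable_pt_lim f x l'.
Proof. intros H ->; auto. Qed.

Lemma d_left a q x : 1 < q -> derivable_pt_lim (fun t => rpow (t - a) q) x (q * rpow (x - a) (q - 1)).
Proof.
  intros Hq. eapply dlim_eq.
  apply (derivable_pt_lim_comp (fun t => t - a) (fun y => rpow y q)).
  apply derivable_pt_lim_minus. apply derivable_pt_lim_id. apply derivable_pt_lim_const.
  apply rpow_deriv; auto. ring.
Qed.
Lemma d_right b q x : 1 < q -> derivable_pt_lim (fun t => rpow (b - t) q) x (- (q * rpow (b - x) (q - 1))).
Proof.
  intros Hq. eapply dlim_eq.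
  apply (derivable_pt_lim_comp (fun t => b - t) (fun y => rpow y q)).
  apply derivable_pt_lim_minus. apply derivable_pt_lim_const. apply derivable_pt_lim_id.
  apply rpow_deriv; auto. ring.
Qed.

Lemma beta_rel a b p q : a < b -> 0 < p -> 0 < q ->
  RInt (fun t => t * (rpow (t - a) p * rpow (b - t) q)) a b * (p + q + 2) =
  RInt (fun t => rpow (t - a) p * rpow (b - t) q) a b * ((p + 1) * b + (q + 1) * a).
Proof.
  intros Hab Hp Hq.
  set (h := fun t => rpow (t - a) p * rpow (b - t) q).
  assert (Hhc : forall x, continuity_pt h x).
  { intros x. apply continuity_pt_mult. apply cont_left; auto. apply cont_right; auto. }
  assert (Hthc : forall x, continuity_pt (fun t => t * h t) x).
  { intros x. apply continuity_pt_mult. apply continuity_pt_id. auto. }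
  set (K1 := (p + 1) * b + (q + 1) * a). set (K2 := p + q + 2).
  set (df := fun t => K1 * h t + (- K2) * (t * h t)).
  set (F := fun t => rpow (t - a) (p + 1) * rpow (b - t) (q + 1)).
  assert (HD : forall x, is_derive F x (df x)).
  { intros x. apply is_derive_Reals. eapply dlim_eq.
    apply (derivable_pt_lim_mult (fun t => rpow (t - a) (p + 1)) (fun t => rpow (b - t) (q + 1))).
    apply d_left; lra. apply d_right; lra.
    replace (p + 1 - 1) with p by ring. replace (q + 1 - 1) with q by ring.
    rewrite !rpow_S. unfold df, h, K1, K2. ring. }
  assert (Hdfc : forall x, continuity_pt df x).
  { intros x. unfold df. apply continuity_pt_plus; apply continuity_pt_mult;
     [apply continuity_pt_const; intros u v; auto|apply Hhc|apply continuity_pt_const; intros u v; auto|apply Hthc]. }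
  assert (HI := is_RInt_derive F df a b (fun x _ => HD x)
                  (fun x _ => proj1 (continuity_pt_filterlim df x) (Hdfc x))).
  assert (HF : minus (F b) (F a) = 0).
  { unfold F. rewrite Rminus_diag. rewrite (rpow_nonpos (a - a)) by lra. rewrite (rpow_nonpos 0) by lra.
    unfold minus, plus, opp; simpl. ring. }
  assert (HI2 : RInt df a b = 0).
  { apply (@is_RInt_unique R_CompleteNormedModule). rewrite <- HF. exact HI. }
  clear HI. rename HI2 into HI.
  unfold df in HI. rewrite RInt_lin in HI.
  2: { apply exR; [lra|]. intros; auto. }
  2: { apply exR; [lra|]. intros; auto. }
  change (RInt (fun t => t * h t) a b * K2 = RInt h a b * K1). unfold K1, K2. set (A := RInt (fun t => t * h t) a b) in *. set (B := RInt h a b) in *. assert (L : forall A B : R, K1*B + - K2*A = 0 -> A*(p+q+2) = B*((p + 1) * b + (q + 1) * a)) by (intros A0 B0 E; unfold K1, K2 in E; nra). apply L; exact HI.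
Qed.

Lemma RInt_scal' f a b k : ex_RInt f a b -> RInt (fun t => k * f t) a b = k * RInt f a b.
Proof.
  intros Hf. apply (@is_RInt_unique R_CompleteNormedModule).
  apply (is_RInt_scal f a b k). exact (@RInt_correct R_CompleteNormedModule f a b Hf).
Qed.

Lemma ex_RInt_scal' f a b k : ex_RInt f a b -> ex_RInt (fun t => k * f t) a b.
Proof. intros H. exact (@ex_RInt_scal R_NormedModule f a b k H). Qed.

Lemma cont_rpow_comp f p x : 0 < p -> continuity_pt f x -> continuity_pt (fun t => rpow (f t) p) x.
Proof. intros Hp Hf. apply (continuity_pt_comp f (fun y => rpow y p)); auto. apply rpow_cont; auto. Qed.

Lemma phi_pos a b phi : a < b -> concave_on a b phi -> (forall t, a <= t <= b -> 0 <= phi t) ->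
  (exists t, a <= t <= b /\ phi t <> 0) -> forall x, a < x < b -> 0 < phi x.
Proof.
  intros Hab Hc Hnn [t0 [Ht0 Hne]] x Hx.
  assert (Hp0 : 0 < phi t0) by (assert (0 <= phi t0) by (apply Hnn; auto); lra).
  destruct (Rtotal_order x t0) as [H|[H|H]].
  - assert (Hch := chord a b phi Hc a x t0 ltac:(lra) ltac:(lra) ltac:(lra) ltac:(lra)).
    assert (0 <= phi a) by (apply Hnn; lra). nra.
  - subst; auto.
  - assert (Hch := chord a b phi Hc t0 x b ltac:(lra) ltac:(lra) ltac:(lra) ltac:(lra)).
    assert (0 <= phi b) by (apply Hnn; lra). nra.
Qed.

Theorem mainTheorem8 (gamma delta c alpha beta : R) (g : R -> R)
  (Hgd : gamma < delta) (Hc : 0 < c)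
  (Hg : forall t, gamma <= t <= delta -> g t = c * (delta - t))
  (Hb : 0 < beta) (Hba : beta < alpha) :
  forall phi : R -> R,
    concave_on gamma delta phi ->
    (forall t, gamma <= t <= delta -> 0 <= phi t) ->
    (exists t, gamma <= t <= delta /\ phi t <> 0) ->
    RInt (fun t => t * rpow (phi t) (alpha - beta) * rpow (g t) beta) gamma delta
      / RInt (fun t => rpow (phi t) (alpha - beta) * rpow (g t) beta) gamma delta
    <=
    RInt (fun t => t * rpow (t - gamma) (alpha - beta) * rpow (g t) beta) gamma delta
      / RInt (fun t => rpow (t - gamma) (alpha - beta) * rpow (g t) beta) gamma delta
    /\
    RInt (fun t => t * rpow (t - gamma) (alpha - beta) * rpow (g t) beta) gamma delta
      / RInt (fun t => rpow (t - gamma) (alpha - beta) * rpow (g t) beta) gamma delta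
    = gamma + (delta - gamma) * ((alpha - beta + 1) / (alpha + 2)).
Proof.
  intros phi Hconc Hnn Hex.
  set (a := gamma) in *. set (b := delta) in *. set (p := alpha - beta).
  assert (Hp : 0 < p) by (unfold p; lra).
  set (C := rpow c beta). assert (HC : 0 < C) by (apply rpow_gt0; auto).
  assert (HG : forall t, a < t < b -> rpow (g t) beta = C * rpow (b - t) beta).
  { intros t Ht. rewrite Hg by lra. apply rpow_mult; lra. }
  set (h := fun t => rpow (t - a) p * rpow (b - t) beta).
  assert (Hhc : forall x, continuity_pt h x).
  { intros x. apply continuity_pt_mult. apply cont_left; auto. apply cont_right; auto. }
  assert (Hthc : forall x, continuity_pt (fun t => t * h t) x).
  { intros x. apply continuity_pt_mult. apply continuity_pt_id. auto. }
  assert (exh : ex_RInt h a b) by (apply exR; [lra|auto]).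
  assert (exth : ex_RInt (fun t => t * h t) a b) by (apply exR; [lra|auto]).
  set (f0N := fun t => t * rpow (t - a) p * rpow (g t) beta).
  set (f0D := fun t => rpow (t - a) p * rpow (g t) beta).
  assert (E0N : forall t, Rmin a b < t < Rmax a b -> C * (t * h t) = f0N t).
  { intros t Ht. rewrite Rmin_left, Rmax_right in Ht by lra.
    unfold f0N, h. rewrite HG by lra. ring. }
  assert (E0D : forall t, Rmin a b < t < Rmax a b -> C * h t = f0D t).
  { intros t Ht. rewrite Rmin_left, Rmax_right in Ht by lra.
    unfold f0D, h. rewrite HG by lra. ring. }
  assert (ex0N : ex_RInt f0N a b).
  { apply (ex_RInt_ext (fun t => C * (t * h t))); auto. apply ex_RInt_scal'; auto. }
  assert (ex0D : ex_RInt f0D a b).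
  { apply (ex_RInt_ext (fun t => C * h t)); auto. apply ex_RInt_scal'; auto. }
  assert (HN0 : RInt f0N a b = C * RInt (fun t => t * h t) a b).
  { rewrite <- RInt_scal' by auto. symmetry. apply RInt_ext. auto. }
  assert (HD0 : RInt f0D a b = C * RInt h a b).
  { rewrite <- RInt_scal' by auto. symmetry. apply RInt_ext. auto. }
  assert (Hbeta := beta_rel a b p beta Hgd Hp Hb). fold h in Hbeta.
  assert (HB0 : 0 < RInt h a b).
  { apply (int_pos h a b ((a + b) / 2)); auto; try lra.
    intros x Hx. unfold h. apply Rmult_le_pos; apply rpow_ge0.
    unfold h. apply Rmult_lt_0_compat; apply rpow_gt0; lra. }
  set (m0 := a + (b - a) * ((alpha - beta + 1) / (alpha + 2))).
  assert (Hm0 : RInt f0N a b / RInt f0D a b = m0).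
  { rewrite HN0, HD0. unfold m0. fold p.
    assert (Hal : alpha + 2 = p + beta + 2) by (unfold p; ring).
    rewrite Hal. field_simplify_eq. 2: { repeat split; lra. }
    change (RInt (fun t => t * h t) a b * (p+beta+2) = RInt h a b * ((p+1)*b + (beta+1)*a)) in Hbeta.
    nra. }
  assert (Hm0a : a < m0 < b).
  { unfold m0. assert (0 < (alpha - beta + 1) / (alpha + 2) < 1).
    { split. apply Rdiv_lt_0_compat; lra.
      apply Rmult_lt_reg_r with (alpha + 2); [lra|]. field_simplify; lra. }
    nra. }
  split; [|exact Hm0].
  fold f0N f0D. rewrite Hm0.
  destruct (ext_cont a b phi Hgd Hconc) as [psi [Hpsi Hpsic]].
  set (fN := fun t => t * rpow (phi t) p * rpow (g t) beta).
  set (fD := fun t => rpow (phi t) p * rpow (g t) beta).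
  set (tN := fun t => t * rpow (psi t) p * rpow (c * (b - t)) beta).
  set (tD := fun t => rpow (psi t) p * rpow (c * (b - t)) beta).
  assert (Hcb : forall x, continuity_pt (fun t => rpow (c * (b - t)) beta) x).
  { intros x. apply cont_rpow_comp; auto. apply continuity_pt_mult.
    apply continuity_pt_const; intros u v; auto.
    apply continuity_pt_minus. apply continuity_pt_const; intros u v; auto. apply continuity_pt_id. }
  assert (HtDc : forall z, a <= z <= b -> continuity_pt tD z).
  { intros z Hz. apply continuity_pt_mult; auto. apply cont_rpow_comp; auto. }
  assert (HtNc : forall z, a <= z <= b -> continuity_pt tN z).
  { intros z Hz. apply continuity_pt_mult; auto. apply continuity_pt_mult; auto.
    apply continuity_pt_id. apply cont_rpow_comp; auto. }
  assert (EN : forall t, Rmin a b < t < Rmax a b -> tN t = fN t).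
  { intros t Ht. rewrite Rmin_left, Rmax_right in Ht by lra.
    unfold tN, fN. rewrite Hpsi, Hg by lra. reflexivity. }
  assert (ED : forall t, Rmin a b < t < Rmax a b -> tD t = fD t).
  { intros t Ht. rewrite Rmin_left, Rmax_right in Ht by lra.
    unfold tD, fD. rewrite Hpsi, Hg by lra. reflexivity. }
  assert (exN : ex_RInt fN a b).
  { apply (ex_RInt_ext tN); auto. apply exR; [lra|auto]. }
  assert (exD : ex_RInt fD a b).
  { apply (ex_RInt_ext tD); auto. apply exR; [lra|auto]. }
  assert (HposD : 0 < RInt fD a b).
  { replace (RInt fD a b) with (RInt tD a b) by (apply RInt_ext; auto).
    apply (int_pos tD a b ((a + b) / 2)); auto; try lra.
    intros x Hx. unfold tD. apply Rmult_le_pos; apply rpow_ge0.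
    unfold tD. rewrite Hpsi by lra. apply Rmult_lt_0_compat; apply rpow_gt0.
    apply (phi_pos a b phi); auto; lra. nra. }
  assert (Hphi_pos := phi_pos a b phi Hgd Hconc Hnn Hex).
  set (R0 := rpow (m0 - a) p). assert (HR0 : 0 < R0) by (apply rpow_gt0; lra).
  set (Pm := rpow (phi m0) p).
  set (k := Pm / R0).
  assert (Hpt : forall x, a < x < b -> 1 * fN x + (- m0) * fD x <= k * (1 * f0N x + (- m0) * f0D x)).
  { intros x Hx. unfold fN, fD, f0N, f0D.
    set (X := rpow (phi x) p). set (Y := rpow (x - a) p). set (G := rpow (g x) beta).
    assert (HGp : 0 <= G) by apply rpow_ge0.
    assert (Hphia : 0 <= phi a) by (apply Hnn; lra).
    assert (Hphix : 0 <= phi x) by (apply Hnn; lra).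
    assert (Hphim : 0 <= phi m0) by (apply Hnn; lra).
    assert (E1 : X * R0 = rpow (phi x * (m0 - a)) p) by (unfold X, R0; rewrite rpow_mult; lra).
    assert (E2 : Pm * Y = rpow (phi m0 * (x - a)) p) by (unfold Pm, Y; rewrite rpow_mult; lra).
    assert (Key : (x - m0) * (X * R0) <= (x - m0) * (Pm * Y)).
    { destruct (Rtotal_order x m0) as [H|[H|H]].
      - assert (Hch := chord a b phi Hconc a x m0 ltac:(lra) ltac:(lra) ltac:(lra) ltac:(lra)).
        apply Rmult_le_compat_neg_l; [lra|]. rewrite E1, E2. apply rpow_le; auto.
        split. apply Rmult_le_pos; lra. nra.
      - subst x. lra.
      - assert (Hch := chord a b phi Hconc a m0 x ltac:(lra) ltac:(lra) ltac:(lra) ltac:(lra)).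
        apply Rmult_le_compat_l; [lra|]. rewrite E1, E2. apply rpow_le; auto.
        split. apply Rmult_le_pos; lra. nra. }
    apply Rmult_le_reg_r with R0; auto.
    replace (k * (1 * (x * Y * G) + - m0 * (Y * G)) * R0) with ((x - m0) * (Pm * Y) * G)
      by (unfold k; field; lra).
    replace ((1 * (x * X * G) + - m0 * (X * G)) * R0) with ((x - m0) * (X * R0) * G) by ring.
    apply Rmult_le_compat_r; auto. }
  assert (Hle := RInt_le _ _ a b (Rlt_le _ _ Hgd) (ex_RInt_lin fN fD a b 1 (- m0) exN exD)
         (ex_RInt_scal' _ a b k (ex_RInt_lin f0N f0D a b 1 (- m0) ex0N ex0D)) Hpt).
  rewrite RInt_lin in Hle by auto.
  rewrite RInt_scal' in Hle by (apply ex_RInt_lin; auto).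
  rewrite RInt_lin in Hle by auto.
  assert (HZ : 1 * RInt f0N a b + - m0 * RInt f0D a b = 0).
  { rewrite <- Hm0. field. rewrite HD0. apply Rgt_not_eq. nra. }
  rewrite HZ, Rmult_0_r in Hle.
  apply Rmult_le_reg_r with (RInt fD a b); auto.
  unfold Rdiv. rewrite Rmult_assoc, Rinv_l by lra. lra.
Qed.
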